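(* In the aggregative setting described in the context, suppose assumptions (i)–(iv) there hold, and define $L_t\triangleq\frac{\mu\max_{i}L_{gi}}{\mu^2+L_a^2}\Big(1-\frac{L_a}{\sqrt{\mu^2+L_a^2}}\Big)^{-1}$. Then for each $i\in\{1,\dots,n\}$ and every $y_i\in\mathcal{R}_i$, $$\|T_i(y_i,z_1)-T_i(y_i,z_2)\|\le L_t\|z_1-z_2\|\quad\text{for all }z_1,z_2\in\mathbb{R}^d.$$
   Context: Aggregative game: $n$ players, each chooses $x_i\in\mathbb{R}^d$; player $i$ has cost $f_i(x_i,\bar x)+r_i(x_i)$ where $\bar x=\sum_jx_j$ and $f_i(x_i,\bar x)=\mathbb{E}[\psi_i(x_i,x_i+\bar x_{-i};\xi_i)]$, $\bar x_{-i}=\sum_{j\ne i}x_j$. Assumptions, for each $i$: (i) $r_i$ is lower semicontinuous and convex with compact effective domain $\mathcal{R}_i$; (ii) for any $y\in\mathbb{R}^d$, $x_i\mapsto f_i(x_i,x_i+y)$ is twice continuously differentiable and convex on $\mathcal{R}_i$; (iii) with $g_i(x_i,y)$ denoting the gradient at $x_i$ of $x_i\mapsto f_i(x_i,x_i+y)$, there is $L_a>0$ such that for any $y\in\mathbb{R}^d$, $\|g_i(x_i,y)-g_i(x_i',y)\|\le L_a\|x_i-x_i'\|$ for $x_i,x_i'\in\mathcal{R}_i$; (iv) for any $x_i\in\mathcal{R}_i$, $\|g_i(x_i,y_1)-g_i(x_i,y_2)\|\le L_{gi}\|y_1-y_2\|$ for all $y_1,y_2\in\mathbb{R}^d$. Fix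 $\mu>0$. For $y_i\in\mathcal{R}_i$, $z\in\mathbb{R}^d$: $T_i(y_i,z)\triangleq\arg\min_{x_i\in\mathbb{R}^d}\big[f_i(x_i,x_i+z-y_i)+r_i(x_i)+\frac\mu2\|x_i-y_i\|^2\big]$ (uniquely defined). *)

(* Defs.v *)
From HB Require Import structures.
From mathcomp Require Import all_boot all_order all_algebra.
From mathcomp Require Import all_classical all_reals all_analysis.
Set Implicit Arguments. Unset Strict Implicit. Unset Printing Implicit Defensive.
Import Order.TTheory GRing.Theory Num.Theory.
Import numFieldNormedType.Exports.
Local Open Scope classical_set_scope.
Local Open Scope ring_scope.

Section Defs.
Variables (R : realType) (d : nat).

Definition dotv (u v : 'rV[R]_d) : R := \sum_(j < d) u 0 j * v 0 j.
Definition enorm (v : 'rV[R]_d) : R := Num.sqrt (\sum_(j < d) v 0 j ^+ 2).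

Definition edom (r : 'rV[R]_d -> \bar R) : set 'rV[R]_d :=
  [set x | (r x < +oo)%E].

Definition econvex (r : 'rV[R]_d -> \bar R) : Prop :=
  forall (x y : 'rV[R]_d) (t : R), 0 <= t <= 1 ->
    let w := t *: x + (1 - t) *: y in
    (r w <= t%:E * r x + (1 - t)%:E * r y)%E.

Definition convex_on (A : set 'rV[R]_d) (h : 'rV[R]_d -> R) : Prop :=
  forall x y (t : R), A x -> A y -> 0 <= t <= 1 ->
    h (t *: x + (1 - t) *: y) <= t * h x + (1 - t) * h y.

Definition C2_on (A : set 'rV[R]_d) (h : 'rV[R]_d -> R) : Prop :=
  exists U : set 'rV[R]_d, [/\ open U, A `<=` U,
    (forall x, U x -> differentiable h x),
    (forall x v, U x -> differentiable (fun x' => 'd h x' v) x) &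
    (forall x v w, U x ->
        {for x, continuous (fun x' => 'd (fun x'' => 'd h x'' v) x' w)})].

Definition prox_obj (f : 'rV[R]_d -> 'rV[R]_d -> R) (r : 'rV[R]_d -> \bar R)
  (mu : R) (y z x : 'rV[R]_d) : \bar R :=
  let q := f x (x + z - y) + mu / 2 * enorm (x - y) ^+ 2 in
  (q%:E + r x)%E.

End Defs.

(* Main.v *)
Require Import Defs.
From HB Require Import structures.
From mathcomp Require Import all_boot all_order all_algebra.
From mathcomp Require Import all_classical all_reals all_analysis.
Import Order.TTheory GRing.Theory Num.Theory.
Import numFieldNormedType.Exports.
Local Open Scope classical_set_scope.
Local Open Scope ring_scope.
From mathcomp Require Import ring lra.

Lemma andP_intro (a b : bool) : a -> b -> a && b. Proof. by move=> -> ->. Qed.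

Lemma right_of_dnbhs (R : realType) (f : R -> R) (l : R) : f @ (0:R)^' --> l -> f @ at_right (0:R) --> l.
Proof.
move=> fl A /fl /nbhs_ballP [_ /posnumP[e] xe_A].
by exists e%:num => //= y xe_y /gt_eqF/negbT/xe_A; exact.
Qed.

Lemma dir_lb (R : realType) d (h : 'rV[R]_d -> R) x v c K :
  differentiable h x ->
  (forall t, 0 < t <= 1 -> c <= (h (x + t *: v) - h x) / t + K * t) ->
  c <= 'd h x v.
Proof.
move=> dh H.
rewrite -deriveE //.
have dv : derivable h x v by apply: diff_derivable.
have q0 := @right_of_dnbhs R _ _ dv.
have k0 : (fun t : R => K * t) @ at_right (0:R) --> 0.
  apply: cvg_at_right_filter; rewrite -[X in _ --> X](mulr0 K); apply: cvgMr; exact: cvg_id.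
have := cvgD q0 k0; rewrite addr0 => HH.
rewrite /derive; apply: (cvgr_to_ge (HH _)).
near=> t.
have t0 : 0 < t by near: t; exact: nbhs_right_gt.
have t1 : t <= 1 by near: t; apply: nbhs_right_le; exact: ltr01.
have := H t (andP_intro _ _ t0 t1).
move=> Hc; apply: (le_trans Hc); rewrite le_eqVlt; apply/orP; left; apply/eqP.
rewrite (addrC x) mulrC; reflexivity.
Unshelve. all: by end_near. Qed.

Lemma dir_ub (R : realType) d (h : 'rV[R]_d -> R) x v c :
  differentiable h x ->
  (forall t, 0 < t <= 1 -> (h (x + t *: v) - h x) / t <= c) ->
  'd h x v <= c.
Proof.
move=> dh H.
rewrite -deriveE //.
have dv : derivable h x v by apply: diff_derivable.
have q0 := @right_of_dnbhs R _ _ dv.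
rewrite /derive; apply: (cvgr_to_le q0).
near=> t.
have t0 : 0 < t by near: t; exact: nbhs_right_gt.
have t1 : t <= 1 by near: t; apply: nbhs_right_le; exact: ltr01.
have := H t (andP_intro _ _ t0 t1).
move=> Hc; apply: le_trans Hc; rewrite le_eqVlt; apply/orP; left; apply/eqP.
rewrite /= (addrC x) mulrC; reflexivity.
Unshelve. all: by end_near. Qed.

Lemma sumsq_ge0 (R : realType) d (u : 'rV[R]_d) : 0 <= \sum_(j < d) u 0 j ^+ 2.
Proof. by apply: sumr_ge0 => j _; exact: sqr_ge0. Qed.

Lemma enorm_sq (R : realType) d (u : 'rV[R]_d) : enorm u ^+ 2 = \sum_(j < d) u 0 j ^+ 2.
Proof. by rewrite /enorm sqr_sqrtr // sumsq_ge0. Qed.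

Lemma sq_expand (R : realType) d (u v : 'rV[R]_d) t :
  \sum_(j < d) (u + t *: v) 0 j ^+ 2 =
  \sum_(j < d) u 0 j ^+ 2 + 2 * t * dotv u v + t ^+ 2 * \sum_(j < d) v 0 j ^+ 2.
Proof.
rewrite /dotv !mulr_sumr -!big_split; apply: eq_bigr => j _; rewrite !mxE /=; ring.
Qed.

Lemma convcomb (R : realType) d (x1 x2 : 'rV[R]_d) t :
  t *: x2 + (1 - t) *: x1 = x1 + t *: (x2 - x1).
Proof. apply/rowP => j; rewrite !mxE /=; ring. Qed.

Lemma lt_bound (R : realType) (mu La M L : R) : 0 < mu -> 0 < La -> L <= M -> 0 <= M ->
  L / mu <= mu * M / (mu ^+ 2 + La ^+ 2) * (1 - La / Num.sqrt (mu ^+ 2 + La ^+ 2))^-1.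
Proof.
move=> mu0 La0 LM M0.
have s2p : 0 < mu ^+ 2 + La ^+ 2 by apply: ltr_wpDr; [exact: sqr_ge0 | exact: exprn_gt0].
set s := Num.sqrt _.
have s2 : s ^+ 2 = mu ^+ 2 + La ^+ 2 by rewrite sqr_sqrtr // ltW.
have sLa : La < s.
  have -> : La = Num.sqrt (La ^+ 2) by rewrite sqrtr_sqr gtr0_norm.
  rewrite ltr_sqrt //; rewrite ltrDr; exact: exprn_gt0.
have s0 : 0 < s by apply: lt_trans sLa.
rewrite -s2.
have e : mu * M / s ^+ 2 * (1 - La / s)^-1 = M / mu + M * La / (mu * s).
  have sLa0 : s - La != 0 by rewrite subr_eq0 gt_eqF.
  have -> : (1 - La / s) = (s - La) / s by field; rewrite gt_eqF.
  apply: (@mulIf _ (mu * s * (s - La))).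
    by rewrite mulf_eq0 negb_or sLa0 mulf_eq0 negb_or !gt_eqF.
  have -> : mu * M / s ^+ 2 * ((s - La) / s)^-1 * (mu * s * (s - La)) = mu ^+ 2 * M.
    by field; rewrite sLa0 gt_eqF.
  have -> : (M / mu + M * La / (mu * s)) * (mu * s * (s - La)) = M * (s ^+ 2 - La ^+ 2).
    by field; rewrite !gt_eqF.
  by rewrite s2; ring.
rewrite e.
have : L / mu <= M / mu by rewrite ler_pM2r // invr_gt0.
move=> h; apply: (le_trans h); rewrite lerDl.
by apply: divr_ge0; [apply: mulr_ge0 => //; exact: ltW | apply: mulr_ge0; exact: ltW].
Qed.

Theorem lemma9 (R : realType) (n d : nat)
  (f : 'I_n -> 'rV[R]_d -> 'rV[R]_d -> R)
  (r : 'I_n -> 'rV[R]_d -> \bar R)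
  (g : 'I_n -> 'rV[R]_d -> 'rV[R]_d -> 'rV[R]_d)
  (La : R) (Lg : 'I_n -> R) (mu : R)
  (T : 'I_n -> 'rV[R]_d -> 'rV[R]_d -> 'rV[R]_d) :
  (* (i) r_i proper, lsc, convex, compact effective domain *)
  (forall i x, r i x != -oo%E) ->
  (forall i, lower_semicontinuous (r i)) ->
  (forall i, econvex (r i)) ->
  (forall i, compact (edom (r i))) ->
  (* (ii) x_i |-> f_i(x_i, x_i + y) is C^2 and convex on R_i *)
  (forall i y, C2_on (edom (r i)) (fun x => f i x (x + y))) ->
  (forall i y, convex_on (edom (r i)) (fun x => f i x (x + y))) ->
  (* g_i(x_i, y) is the gradient at x_i of x_i |-> f_i(x_i, x_i + y) *)
  (forall i y x v, edom (r i) x ->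
     'd (fun x' => f i x' (x' + y)) x v = dotv (g i x y) v) ->
  (* (iii) *)
  0 < La ->
  (forall i y x x', edom (r i) x -> edom (r i) x' ->
     enorm (g i x y - g i x' y) <= La * enorm (x - x')) ->
  (* (iv) *)
  (forall i x y1 y2, edom (r i) x ->
     enorm (g i x y1 - g i x y2) <= Lg i * enorm (y1 - y2)) ->
  0 < mu ->
  (* T_i(y_i, z) is the (unique) minimizer of the proximal objective *)
  (forall i y z x, edom (r i) y ->
     (prox_obj (f i) (r i) mu y z (T i y z) <= prox_obj (f i) (r i) mu y z x)%E) ->
  let Lt := mu * (\big[Num.max/0]_(j < n) Lg j) / (mu ^+ 2 + La ^+ 2)
            * (1 - La / Num.sqrt (mu ^+ 2 + La ^+ 2))^-1 in
  forall i y, edom (r i) y ->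
  forall z1 z2 : 'rV[R]_d,
    enorm (T i y z1 - T i y z2) <= Lt * enorm (z1 - z2).

Proof.
move=> Hnm _ Hcvx _ HC2 Hconv Hgrad La0 HLa HLg mu0 Hmin Lt i y ey z1 z2.
have fin : forall x, edom (r i) x -> exists rx, r i x = rx%:E.
  move=> x; rewrite /edom /=; case E: (r i x) => [rx| |] //.
  - by exists rx.
  - by have := Hnm i x; rewrite E.
have [ry Ery] := fin y ey.
have edT : forall z, edom (r i) (T i y z).
  move=> z; have := Hmin i y z y ey; rewrite /prox_obj /= Ery.
  rewrite /edom /=; case: (r i (T i y z)) => [rx| |] //=.
  by rewrite leNgt ltey.
have diffh : forall a x, edom (r i) x -> differentiable (fun x' => f i x' (x' + a)) x.
  by move=> a x ex; case: (HC2 i a) => U [_ sub dU _ _]; exact: dU (sub _ ex).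
have prox : forall z x1 x2 R1 R2, x1 = T i y z -> edom (r i) x2 ->
    r i x1 = R1%:E -> r i x2 = R2%:E ->
    - mu * dotv (x1 - y) (x2 - x1) - (R2 - R1) <= dotv (g i x1 (z - y)) (x2 - x1).
  move=> z x1 x2 R1 R2 Ex1 ex2 E1 E2.
  have ex1 : edom (r i) x1 by rewrite Ex1; exact: edT.
  rewrite -Hgrad //.
  apply: (@dir_lb R d _ _ _ _ (mu / 2 * \sum_(j < d) (x2 - x1) 0 j ^+ 2) (diffh _ _ ex1)).
  move=> t /andP[t0 t1].
  have H1 := Hmin i y z (x1 + t *: (x2 - x1)) ey.
  rewrite -Ex1 in H1.
  have H2 := Hcvx i x2 x1 t (andP_intro _ _ (ltW t0) t1).
  rewrite /= convcomb E1 E2 in H2.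
  rewrite /prox_obj /= E1 in H1.
  have H3 := le_trans H1 (leeD2l _ H2).
  rewrite -!EFinM -!EFinD lee_fin in H3.
  have ef : forall x, f i x (x + z - y) = f i x (x + (z - y)) by move=> x; rewrite addrA.
  rewrite !ef !enorm_sq in H3.
  have exy : x1 + t *: (x2 - x1) - y = (x1 - y) + t *: (x2 - x1).
    by apply/rowP => j; rewrite !mxE /=; ring.
  rewrite exy sq_expand in H3.
  move: H3.
  move=> H3.
  rewrite -(ler_pM2r t0) [X in _ <= X]mulrDl divfK ?gt_eqF //.
  nra.
have conv : forall a x1 x2, edom (r i) x1 -> edom (r i) x2 ->
    dotv (g i x1 a) (x2 - x1) <= f i x2 (x2 + a) - f i x1 (x1 + a).
  move=> a x1 x2 e1 e2; rewrite -Hgrad //.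
  apply: (@dir_ub R d _ _ _ _ (diffh _ _ e1)) => t /andP[t0 t1].
  have := Hconv i a x2 x1 t e2 e1 (andP_intro _ _ (ltW t0) t1).
  rewrite convcomb => H.
  rewrite ler_pdivrMr //.
  lra.
set x1 := T i y z1; set x2 := T i y z2.
have e1 : edom (r i) x1 by exact: edT.
have e2 : edom (r i) x2 by exact: edT.
have [R1 E1] := fin _ e1.
have [R2 E2] := fin _ e2.
have P1 := prox z1 x1 x2 R1 R2 erefl e2 E1 E2.
have P2 := prox z2 x2 x1 R2 R1 erefl e1 E2 E1.
have C1 := conv (z1 - y) x1 x2 e1 e2.
have C2 := conv (z1 - y) x2 x1 e2 e1.
set p := g i x2 (z1 - y) - g i x2 (z2 - y).
set Sw := \sum_(j < d) (x1 - x2) 0 j ^+ 2.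
set Sp := \sum_(j < d) p 0 j ^+ 2.
have I1 : dotv (x1 - y) (x2 - x1) + dotv (x2 - y) (x1 - x2) = - Sw.
  rewrite /dotv /Sw -big_split -sumrN; apply: eq_bigr => j _; rewrite !mxE /=; ring.
have I2 : dotv p (x1 - x2) = dotv (g i x2 (z1 - y)) (x1 - x2) - dotv (g i x2 (z2 - y)) (x1 - x2).
  rewrite /dotv -sumrB; apply: eq_bigr => j _; rewrite /p !mxE /=; ring.
have I2' : dotv (g i x1 (z1 - y)) (x2 - x1) = - dotv (g i x1 (z1 - y)) (x1 - x2).
  rewrite /dotv -sumrN; apply: eq_bigr => j _; rewrite !mxE /=; ring.
have I3 : 0 <= mu ^+ 2 * Sw + 2 * mu * dotv p (x1 - x2) + Sp.
  have -> : mu ^+ 2 * Sw + 2 * mu * dotv p (x1 - x2) + Sp =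
     \sum_(j < d) (mu * (x1 - x2) 0 j + p 0 j) ^+ 2.
    rewrite /Sw /Sp /dotv !mulr_sumr -!big_split; apply: eq_bigr => j _; rewrite !mxE /=. ring.
  by apply: sumr_ge0 => j _; exact: sqr_ge0.
move: P1 P2 C1 C2 I1 I2 I2' I3.
set A1 := dotv (x1 - y) (x2 - x1).
set A2 := dotv (x2 - y) (x1 - x2).
set G11 := dotv (g i x1 (z1 - y)) (x2 - x1).
set G11' := dotv (g i x1 (z1 - y)) (x1 - x2).
set G22 := dotv (g i x2 (z2 - y)) (x1 - x2).
set G21 := dotv (g i x2 (z1 - y)) (x1 - x2).
set Pw := dotv p (x1 - x2).
move=> P1 P2 C1 C2 I1 I2 I2' I3.
have Hw : mu * Sw <= - Pw by nra.
have Hw2 : mu ^+ 2 * Sw <= Sp by nra.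
have Sw0 : 0 <= Sw by exact: sumsq_ge0.
have Hn : mu * enorm (x1 - x2) <= enorm p.
  rewrite /enorm -/Sw -/Sp.
  have -> : mu * Num.sqrt Sw = Num.sqrt (mu ^+ 2 * Sw).
    by rewrite sqrtrM ?sqr_ge0 // sqrtr_sqr gtr0_norm.
  by rewrite ler_sqrt // sumsq_ge0.
have Hp : enorm p <= Lg i * enorm (z1 - z2).
  have := HLg i x2 (z1 - y) (z2 - y) e2.
  by have -> : z1 - y - (z2 - y) = z1 - z2 by apply/rowP => j; rewrite !mxE /=; ring.
have N0 : 0 <= enorm (z1 - z2) by exact: sqrtr_ge0.
have LB := @lt_bound R mu La (\big[Num.max/0]_(j < n) Lg j) (Lg i) mu0 La0
   (le_bigmax _ _ i) (bigmax_ge_id _ _ _ _).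
have : enorm (x1 - x2) <= Lg i / mu * enorm (z1 - z2).
  rewrite mulrAC ler_pdivlMr // mulrC.
  exact: le_trans Hn Hp.
move=> h; apply: (le_trans h).
by rewrite ler_wpM2r.
Qed.
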